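(* For a finite rooted tree $T$ whose nodes $v$ carry labels $\ell(v)\in\mathbb{N}=\{1,2,\dots\}$, let $p_i$ denote the $i$-th prime, let $n_v$ be the number of vertices in the subtree $T_v$ rooted at $v$, and define $C_v(x)\in\mathbb{Z}[x]$ inductively by $C_v(x)=x+p_{\ell(v)}$ if $v$ is a leaf and $C_v(x)=x^{n_v}+p_{\ell(v)}\,x\prod_{u\text{ child of }v}C_u(x)+p_{\ell(v)}$ if $v$ is internal. Let $r$ be the root of $T$. Then $C_r(x)$ is a complete invariant for rooted labelled trees: for any two such labelled rooted trees $T$ (root $r$) and $T'$ (root $r'$), $C_r(x)=C_{r'}(x)$ if and only if there is an isomorphism of rooted trees from $T$ to $T'$ preserving labels.
   Context: An isomorphism of rooted labelled trees is a graph isomorphism mapping root to root and each node to a node with the same label. $T_v$ consists of $v$ and all its descendants. *)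

(* Defs.v *)
From HB Require Import structures.
From mathcomp Require Import all_boot all_order all_algebra.
Set Implicit Arguments. Unset Strict Implicit. Unset Printing Implicit Defensive.
Import GRing.Theory Num.Theory.

Definition next_prime (m : nat) : nat :=
  ex_minn (let: exist2 p Hlt Hp := prime_above m in
           ex_intro (fun q => (m < q) && prime q) p (introT andP (conj Hlt Hp))).

Fixpoint nthp (k : nat) : nat :=
  match k with 0 => 2 | k'.+1 => next_prime (nthp k') end.

Definition ith_prime (i : nat) : nat := nthp i.-1.

(* A tree is given by a finite vertex type, a root, and a parent map;
   the root is its own parent, and every vertex reaches the root by
   iterating the parent map (hence the structure is acyclic). *)
Record rltree := RLTree {
  vtx : finType;
  troot : vtx;
  parent : vtx -> vtx;
  label : vtx -> nat;
  parent_root : parent troot = troot;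
  reach_root : forall v, connect (frel parent) v troot;
  label_pos : forall v, 0 < label v
}.

Definition adj (T : rltree) (u v : vtx T) : bool :=
  (u != v) && ((parent u == v) || (parent v == u)).

Definition children (T : rltree) (v : vtx T) : {set vtx T} :=
  [set u | (u != troot T) && (parent u == v)].

Definition subtree (T : rltree) (v : vtx T) : {set vtx T} :=
  [set u | connect (frel (parent (r:=T))) u v].

Definition nsub (T : rltree) (v : vtx T) : nat := #|subtree v|.

(* C_v computed with fuel; fuel #|V| suffices since depth < #|V| *)
Fixpoint Cfuel (T : rltree) (k : nat) (v : vtx T) : {poly int} :=
  match k with
  | 0 => 0%R
  | k'.+1 =>
      let pv : {poly int} := (((ith_prime (label v))%:Z)%:P)%R in
      if children v == set0 then ('X + pv)%R
      else ('X^(nsub v) + pv * 'X * \prod_(u in children v) Cfuel k' u + pv)%R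
  end.

Definition Cpoly (T : rltree) (v : vtx T) : {poly int} := Cfuel #|vtx T| v.

Definition rl_iso (T T' : rltree) (f : vtx T -> vtx T') : Prop :=
  [/\ bijective f,
      f (troot T) = troot T',
      (forall v, label (f v) = label v) &
      (forall u v, adj (f u) (f v) = adj u v)].

(* Main.v *)
Require Import Defs.
From HB Require Import structures.
From mathcomp Require Import all_boot all_order all_algebra.
From mathcomp Require Import zify.
From Stdlib Require Import IndefiniteDescription.
Set Implicit Arguments. Unset Strict Implicit. Unset Printing Implicit Defensive.
Import Order.TTheory GRing.Theory Num.Theory.

Section PolyPart.
Local Open Scope ring_scope.
Local Notation pZtoQ := (map_poly (intr : int -> rat)).

Lemma le1_eq1 k : (k <= 1)%N -> k != 0%N -> k = 1%N.
Proof. by case: k => [|[|]]. Qed.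

Definition good (P : {poly int}) : Prop :=
  exists p : nat, [/\ prime p, P`_0 = p%:Z, ~~ (p%:Z %| lead_coef P)%Z &
     forall i, (i < (size P).-1)%N -> (p%:Z %| P`_i)%Z].

Lemma dvdzM_prime (p : nat) (x y : int) : prime p ->
  (p%:Z %| x * y)%Z = (p%:Z %| x)%Z || (p%:Z %| y)%Z.
Proof. by move=> pp; rewrite !dvdzE abszM /= Euclid_dvdM. Qed.

Lemma eis_half (P B D : {poly int}) (p : nat) :
  prime p -> P = B * D -> ~~ (p%:Z %| lead_coef P)%Z ->
  (forall i, (i < (size P).-1)%N -> (p%:Z %| P`_i)%Z) ->
  ~~ (p%:Z %| D`_0)%Z -> (size D <= 1)%N.
Proof.
move=> pp PE hl hi hD.
have P0 : P != 0 by apply: contraNneq hl => ->; rewrite lead_coef0 dvdz0.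
have B0 : B != 0 by apply: contraNneq P0 => B0; rewrite PE B0 mul0r.
have D0 : D != 0 by apply: contraNneq P0 => D0; rewrite PE D0 mulr0.
have hlB : ~~ (p%:Z %| lead_coef B)%Z.
  by apply: contra hl; rewrite PE lead_coefM => h; apply: dvdz_mulr.
have exi : exists i, ~~ (p%:Z %| B`_i)%Z by exists (size B).-1.
case: (ex_minnP exi) => i hBi hmin.
have hPi : ~~ (p%:Z %| P`_i)%Z.
  rewrite PE coefM big_ord_recr /= subnn.
  rewrite rpredDl; first by rewrite dvdzM_prime // negb_or hBi.
  apply: rpred_sum => j _; apply: dvdz_mulr.
  apply: contraT => hj; have := hmin _ hj; rewrite leqNgt ltn_ord //.
have hiP : ((size P).-1 <= i)%N.
  by rewrite leqNgt; apply: contra hPi => /hi.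
have hBi0 : B`_i != 0 by apply: contraNneq hBi => ->; rewrite dvdz0.
have hiB : (i < size B)%N.
  by rewrite ltnNge; apply: contra hBi0 => h; rewrite nth_default.
move: hiP; rewrite PE size_mul //.
have := size_poly_gt0 B; have := size_poly_gt0 D; rewrite B0 D0 => h1 h2 hiP.
move: hiB hiP h1 h2; clear; rewrite -!subn1; set x := size B; set y := size D; move=> *; lia.
Qed.

Lemma eisenstein (P B D : {poly int}) : good P -> P = B * D ->
  (size B <= 1)%N || (size D <= 1)%N.
Proof.
case=> p [pp h0 hl hi] PE.
have : ~~ (p%:Z %| B`_0)%Z || ~~ (p%:Z %| D`_0)%Z.
  rewrite -negb_and; apply/negP => /andP [hB hD].
  have := dvdz_mul hB hD; rewrite -coef0M -PE h0 dvdzE abszM !absz_nat.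
  move/dvdn_leq; have := prime_gt1 pp => hp1.
  have hp0 := prime_gt0 pp.
  move/(_ hp0); by rewrite leqNgt ltn_Pmull.
case/orP => h.
- have PE2 : P = D * B by rewrite PE mulrC.
  by rewrite (eis_half pp PE2 hl hi h).
- by rewrite (eis_half pp PE hl hi h) orbT.
Qed.

Lemma good_size P : good P -> (1 < size P)%N.
Proof.
case=> p [pp h0 hl hi].
case E: (size P) => [|[|n]] //.
- move/eqP: E; rewrite size_poly_eq0 => /eqP PE.
  by move: h0; rewrite PE coef0 => -[] p0; move: pp; rewrite -p0.
- by move: hl; rewrite /lead_coef E h0 dvdzz.
Qed.

Lemma good_neq0 P : good P -> P != 0.
Proof. by move/good_size => h; rewrite -size_poly_gt0; lia. Qed.

Lemma good_irr P : good P -> irreducible_poly (pZtoQ P).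
Proof.
move=> gP; split; first by rewrite size_rat_int_poly good_size.
move=> q q1 /dvdpP_rat_int [p1 [a a0 qE] [r rE]].
have P0 := good_neq0 gP.
have := eisenstein gP rE; case/orP => hs.
- exfalso; move: q1; rewrite qE size_scale // size_rat_int_poly.
  have : size p1 != 0%N.
    by rewrite size_poly_eq0; apply: contra P0 => /eqP p0; rewrite rE p0 mul0r.
  by move=> h; rewrite (le1_eq1 hs h).
- have r0 : r != 0 by apply: contraNneq P0 => r0; rewrite rE r0 mulr0.
  have /size_poly1P [c c0 rc] : size r == 1%N.
    by move: r0; rewrite -size_poly_eq0 => h; rewrite (le1_eq1 hs h).
  have -> : pZtoQ P = (c%:~R : rat) *: pZtoQ p1.
    by rewrite rE rc rmorphM /= map_polyC /= mulrC mul_polyC.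
  rewrite qE; apply: (eqp_trans (eqp_scale _ a0)).
  rewrite eqp_sym; apply: eqp_scale; by rewrite intr_eq0.
Qed.

Lemma irr_dvd_prod (J : eqType) (r : seq J) (G : J -> {poly rat}) (P : {poly rat}) :
  irreducible_poly P -> P %| \prod_(j <- r) G j -> exists2 j, j \in r & P %| G j.
Proof.
move=> irrP; elim: r => [|j r IH].
  by rewrite big_nil dvdp1 => /eqP h; have := irrP.1; rewrite h.
rewrite big_cons => hd.
case: (irredp_XsubCP irrP (dvdp_gcdl P (G j))) => [h1|h2].
- have cop : coprimep P (G j) by rewrite -gcdp_eqp1.
  rewrite Gauss_dvdpr // in hd; case: (IH hd) => k kr hk.
  by exists k => //; rewrite inE kr orbT.
- exists j; first by rewrite inE eqxx.
  by rewrite -(eqp_dvdl _ h2) dvdp_gcdr.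
Qed.

Lemma good_eq P Q : good P -> good Q -> pZtoQ P %= pZtoQ Q -> P = Q.
Proof.
move=> gP gQ; case: (gP) => p [pp p0 pl pi]; case: (gQ) => q [qp q0 ql qi].
move/eqp_eq; rewrite !lead_coef_map_inj //; try exact: intr_inj.
rewrite -!map_polyZ => /(map_inj_poly (@intr_inj _) (rmorph0 _)) h.
have h0 := congr1 (fun X : {poly int} => X`_0) h; move: h0 => /=; rewrite !coefZ p0 q0 => h0.
have hpq : (p%:Z %| lead_coef P * q%:Z)%Z by rewrite -h0 dvdz_mull.
rewrite dvdzM_prime // (negPf pl) /= dvdzE !absz_nat dvdn_prime2 // in hpq.
move/eqP: hpq => pq; subst q.
have hl : lead_coef Q = lead_coef P.
  apply: (@mulIf _ p%:Z); last exact h0.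
  by apply/eqP => -[] pz; move: pp; rewrite pz.
rewrite hl in h.
apply: (@mulfI _ (lead_coef P)%:P); first by rewrite polyC_eq0 lead_coef_eq0 good_neq0.
by rewrite !mul_polyC.
Qed.

Lemma matching (I J : finType) (j0 : J) (F : I -> {poly int}) (G : J -> {poly int}) :
  forall n (A : {set I}) (B : {set J}), #|A| = n ->
  (forall i, i \in A -> good (F i)) -> (forall j, j \in B -> good (G j)) ->
  \prod_(i in A) F i = \prod_(j in B) G j ->
  exists s : I -> J, [/\ forall i, i \in A -> s i \in B,
     forall i, i \in A -> G (s i) = F i & {in A &, injective s}].
Proof.
elim=> [|n IH] A B cA gF gG hP.
  have A0 : A = set0 by apply/eqP; rewrite -cards_eq0 cA.
  by exists (fun _ => j0); subst A; split => [i|i|i]; rewrite inE.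
have [a aA] : exists a, a \in A by apply/set0Pn; rewrite -card_gt0 cA.
rewrite (big_setD1 a aA) /= in hP.
have hd : pZtoQ (F a) %| \prod_(j <- enum B) pZtoQ (G j).
  by rewrite -rmorph_prod /= big_enum /= -hP rmorphM /= dvdp_mulIl.
have [b] := irr_dvd_prod (good_irr (gF a aA)) hd.
rewrite mem_enum => bB hab.
have eab : G b = F a.
  symmetry; apply: good_eq (gF a aA) (gG b bB) _.
  apply: (good_irr (gG b bB)) hab.
  by have := good_size (gF a aA); rewrite size_rat_int_poly => h; apply/eqP => e; rewrite e in h.
rewrite (big_setD1 b bB) /= eab in hP.
have {}hP := mulfI (good_neq0 (gF a aA)) hP.
have cA' : #|A :\ a| = n by move: cA; rewrite (cardsD1 a) aA add1n => -[].
have [s' [s1 s2 s3]] := IH (A :\ a) (B :\ b) cA'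
   (fun i h => gF i (subsetP (subsetDl A [set a]) i h))
   (fun j h => gG j (subsetP (subsetDl B [set b]) j h)) hP.
exists (fun i => if i == a then b else s' i); split.
- move=> i iA; case: eqP => // /eqP ia.
  by have := s1 i; rewrite !in_setD1 ia iA => /(_ isT) /andP [].
- move=> i iA; case: eqP => [->|/eqP ia] //.
  by apply: s2; rewrite in_setD1 ia iA.
- move=> i1 i2 h1 h2 /=.
  case: (eqVneq i1 a) => [->|n1]; case: (eqVneq i2 a) => [->|n2] //.
  + move=> e; have := s1 i2; rewrite in_setD1 n2 h2 -e => /(_ isT).
    by rewrite in_setD1 eqxx.
  + move=> e; have := s1 i1; rewrite in_setD1 n1 h1 e => /(_ isT).
    by rewrite in_setD1 eqxx.
  + by apply: s3; rewrite in_setD1 ?n1 ?n2.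
Qed.

End PolyPart.

Section Tree.
Variable T : rltree.
Local Notation V := (vtx T).
Local Notation par := (@parent T).
Local Notation rt := (troot T).

Lemma ex_depth (x : V) : exists n, iter n par x == rt.
Proof. by have /iter_findex h := reach_root x; exists (findex par x rt); rewrite h. Qed.

Definition depth (x : V) := ex_minn (ex_depth x).

Lemma depthP x : iter (depth x) par x = rt.
Proof. by rewrite /depth; case: ex_minnP => n /eqP. Qed.

Lemma depth_min x n : iter n par x = rt -> depth x <= n.
Proof. by rewrite /depth; case: ex_minnP => m _ h /eqP; apply: h. Qed.

Lemma iter_rt n : iter n par rt = rt.
Proof. exact: iter_fix (parent_root T). Qed.

Lemma iter_ge x n : depth x <= n -> iter n par x = rt.
Proof. by move=> h; rewrite -(subnK h) iterD depthP iter_rt. Qed.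

Lemma depth_rt : depth rt = 0.
Proof. by apply/eqP; rewrite -leqn0; apply: depth_min. Qed.

Lemma depth0 x : depth x = 0 -> x = rt.
Proof. by move=> h; have := depthP x; rewrite h. Qed.

Lemma depth_gt0 x : x != rt -> 0 < depth x.
Proof. by move=> xr; rewrite lt0n; apply: contra xr => /eqP/depth0 ->. Qed.

Lemma depth_par x : x != rt -> depth (par x) = (depth x).-1.
Proof.
move=> xr; have dx := depth_gt0 xr.
apply/eqP; rewrite eqn_leq; apply/andP; split.
  by apply: depth_min; rewrite -iterSr prednK // depthP.
have : depth x <= (depth (par x)).+1 by apply: depth_min; rewrite iterSr depthP.
move: dx; clear; set a := depth x; set b := depth _; move=> *; lia.
Qed.

Lemma depth_iter x k : depth (iter k par x) = depth x - k.
Proof.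
elim: k => [|k IH]; first by rewrite subn0.
rewrite iterS; case: (eqVneq (iter k par x) rt) => [e|ne].
  rewrite e parent_root depth_rt; have := depth_min e.
  by clear; set a := depth x; move=> *; lia.
rewrite depth_par // IH; by clear; set a := depth x; lia.
Qed.

Lemma subtreeP (x v : V) : (x \in subtree v) = (iter (depth x - depth v) par x == v).
Proof.
rewrite /subtree inE; apply/idP/eqP => [h|h]; last by rewrite -h fconnect_iter.
have := iter_findex h; move: (findex _ _ _) => k e.
have dv := depth_iter x k; rewrite e in dv.
case: (leqP k (depth x)) => hk.
  have -> : depth x - depth v = k by move: dv hk; clear; set a := depth x; set b := depth v; move=> *; lia.
  by [].
have vr : v = rt by rewrite -e iter_ge // ltnW.
by rewrite vr depth_rt subn0 depthP.
Qed.

Lemma sub_depth (x v : V) : x \in subtree v -> depth v <= depth x.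
Proof. by rewrite subtreeP => /eqP e; rewrite -{1}e depth_iter leq_subr. Qed.

Lemma sub_iter (x : V) k : x \in @subtree T (iter k par x).
Proof. by rewrite /subtree inE fconnect_iter. Qed.

Lemma st_refl (v : V) : v \in subtree v.
Proof. exact: (sub_iter v 0). Qed.

Lemma st_trans (x y z : V) : x \in subtree y -> y \in subtree z -> x \in subtree z.
Proof. rewrite /subtree !inE; exact: connect_trans. Qed.

Lemma sub_rt (x : V) : x \in subtree rt.
Proof. by rewrite /subtree inE reach_root. Qed.

Lemma chP (u v : V) : (u \in children v) = (u != rt) && (par u == v).
Proof. by rewrite /children inE. Qed.

Lemma ch_depth (u v : V) : u \in children v -> depth u = (depth v).+1.
Proof.
rewrite chP => /andP [ur /eqP e]; have := depth_par ur; rewrite e => ->.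
by rewrite prednK // depth_gt0.
Qed.

Lemma ch_sub (u v : V) : u \in children v -> u \in subtree v.
Proof. by rewrite chP => /andP [_ /eqP <-]; apply: (sub_iter u 1). Qed.

Lemma ch_notsub (u v : V) : u \in children v -> v \notin subtree u.
Proof.
move=> h; apply/negP => /sub_depth; rewrite (ch_depth h).
by clear; set a := depth v; lia.
Qed.

Lemma ch_sub_sub (u v x : V) : u \in children v -> x \in subtree u -> x \in subtree v.
Proof. by move=> h1 h2; apply: st_trans h2 (ch_sub h1). Qed.

Lemma sub_ch (x v : V) : x \in subtree v -> x != v -> exists2 u, u \in children v & x \in subtree u.
Proof.
rewrite subtreeP => /eqP e xv.
have k0 : 0 < depth x - depth v.
  by rewrite lt0n; apply: contra xv => /eqP k0; rewrite -e k0.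
exists (iter (depth x - depth v).-1 par x); last exact: sub_iter.
rewrite chP -iterS prednK // e eqxx andbT.
apply/negP => /eqP ur.
have : depth (iter (depth x - depth v).-1 par x) = 0 by rewrite ur depth_rt.
rewrite depth_iter; move: k0; clear; set a := depth x; set b := depth v; lia.
Qed.

Lemma ch_uniq (u1 u2 v x : V) : u1 \in children v -> u2 \in children v ->
  x \in subtree u1 -> x \in subtree u2 -> u1 = u2.
Proof.
move=> h1 h2; rewrite !subtreeP (ch_depth h1) (ch_depth h2) => /eqP <- /eqP <-.
by [].
Qed.

Lemma par_sub (x u : V) : x \in subtree u -> x != u -> par x \in subtree u.
Proof.
rewrite !subtreeP => /eqP e xu.
have k0 : 0 < depth x - depth u.
  by rewrite lt0n; apply: contra xu => /eqP k0; rewrite -e k0.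
have xr : x != rt.
  apply/negP => /eqP xr; move: k0; rewrite xr depth_rt.
  by clear; set a := depth u; lia.
rewrite depth_par //.
have -> : (depth x).-1 - depth u = (depth x - depth u).-1.
  by clear; set a := depth x; set b := depth u; lia.
by rewrite -iterSr prednK // e.
Qed.

Lemma leaf_sub (v : V) : children v = set0 -> subtree v = [set v].
Proof.
move=> cv; apply/setP => x; rewrite inE; apply/idP/eqP => [h|->]; last exact: st_refl.
apply/eqP; apply: contraT => xv; case: (sub_ch h xv) => u.
by rewrite cv inE.
Qed.

Lemma nsub_rec (v : V) : nsub v = (\sum_(u in children v) nsub u).+1.
Proof.
rewrite /nsub -sum1_card (bigD1 v) ?st_refl //= add1n; congr _.+1.
rewrite (eq_bigr (fun x => \sum_(u in children v) (x \in subtree u : nat))).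
  rewrite exchange_big /=; apply: eq_bigr => u uc; rewrite -sum1_card.
  rewrite big_mkcond [RHS]big_mkcond /=; apply: eq_bigr => x _.
  case: (boolP (x \in subtree u)) => xu; last by case: (_ && _).
  rewrite (ch_sub_sub uc xu) /=.
  case: (eqVneq x v) => [exv|] //.
  by have := ch_notsub uc; rewrite -exv xu.
move=> x /andP [xs xv]; case: (sub_ch xs xv) => u uc xu.
rewrite (bigD1 u) //= xu big1 // => u' /andP [u'c u'u].
apply/eqP; rewrite eqb0; apply/negP => xu'.
by rewrite (ch_uniq uc u'c xu xu') eqxx in u'u.
Qed.

Lemma nsub_gt0 (v : V) : 0 < nsub v.
Proof. by apply/card_gt0P; exists v; exact: st_refl. Qed.

Lemma nsub_ch (u v : V) : u \in children v -> nsub u < nsub v.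
Proof.
move=> uc; apply: proper_card; apply/properP; split.
  by apply/subsetP => x; exact: ch_sub_sub.
by exists v; [exact: st_refl | exact: ch_notsub].
Qed.

Lemma leaf_nsub (v : V) : (children v == set0) = (nsub v == 1).
Proof.
rewrite nsub_rec; case: (eqVneq (children v) set0) => [->|/set0Pn [u uc]].
  by rewrite big_set0.
rewrite eqSS; apply/esym/negP => /eqP h.
have := nsub_gt0 u; have : nsub u <= \sum_(u in children v) nsub u.
  by rewrite (bigD1 u) //= leq_addr.
by rewrite h; clear; set a := nsub u; lia.
Qed.

End Tree.

Lemma nthp_lt k : nthp k < nthp k.+1.
Proof. by rewrite /= /next_prime; case: ex_minnP => q /andP [h _] _. Qed.

Lemma nthp_prime k : prime (nthp k).
Proof. by case: k => //= k; rewrite /next_prime; case: ex_minnP => q /andP [_ h] _. Qed.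

Lemma nthp_homo m n : m < n -> nthp m < nthp n.
Proof.
elim: n => // n IH; rewrite ltnS leq_eqVlt => /orP [/eqP ->|h].
  exact: nthp_lt.
exact: ltn_trans (IH h) (nthp_lt n).
Qed.

Lemma nthp_inj : injective nthp.
Proof.
move=> m n e; case: (ltngtP m n) => // h; have := nthp_homo h; rewrite e ltnn //.
Qed.

Lemma ith_prime_inj (a b : nat) : 0 < a -> 0 < b -> ith_prime a = ith_prime b -> a = b.
Proof. by rewrite /ith_prime => ha hb /nthp_inj h; rewrite -(prednK ha) -(prednK hb) h. Qed.

Section Cpart.
Variable T : rltree.
Local Notation V := (vtx T).
Local Notation par := (@parent T).
Local Notation rt := (troot T).
Local Open Scope ring_scope.

Lemma Cfuel_S k (v : V) : (nsub v <= k)%N -> Cfuel k v = Cfuel k.+1 v.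
Proof.
elim: k v => [|k IH] v hv.
  by have := nsub_gt0 v; rewrite ltnNge hv.
rewrite [LHS]/= [RHS]/=; case: ifP => // _.
rewrite (eq_bigr (@Cfuel T k.+1)) // => u uc; apply: IH.
by have := nsub_ch uc; move: hv; clear; set a := nsub u; set b := nsub v; lia.
Qed.

Lemma Cfuel_mono a b (v : V) : (nsub v <= a)%N -> (a <= b)%N -> Cfuel a v = Cfuel b v.
Proof.
move=> ha /subnK <-; elim: (b - a)%N => [|m IH]; first by rewrite add0n.
by rewrite IH addSn Cfuel_S // (leq_trans ha) // leq_addl.
Qed.

Lemma Cfuel_C k (v : V) : (nsub v <= k)%N -> Cfuel k v = Cpoly v.
Proof.
move=> h; rewrite /Cpoly; have hV : (nsub v <= #|V|)%N by apply: max_card.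
case: (leqP k #|V|) => hk; first exact: Cfuel_mono.
by symmetry; apply: Cfuel_mono => //; apply: ltnW.
Qed.

Definition pv (v : V) : {poly int} := (((ith_prime (label v))%:Z)%:P).

Lemma C_rec (v : V) : Cpoly v = if children v == set0 then 'X + pv v
   else 'X^(nsub v) + pv v * 'X * \prod_(u in children v) Cpoly u + pv v.
Proof.
have [n E] : exists n, nsub v = n.+1.
  by exists (nsub v).-1; rewrite prednK // nsub_gt0.
rewrite -(@Cfuel_C n.+1) ?E //= -E; case: ifP => // _.
rewrite (eq_bigr (@Cpoly T)) // => u uc; apply: Cfuel_C.
by have := nsub_ch uc; rewrite E ltnS.
Qed.

End Cpart.

Section Cpart2.
Variable T : rltree.
Local Notation V := (vtx T).
Local Open Scope ring_scope.

Lemma p_not_dvd1 (p : nat) : prime p -> ~~ (p%:Z %| 1)%Z.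
Proof. by move=> pp; rewrite dvdz1 absz_nat; have := prime_gt1 pp; case: p {pp} => [|[|]]. Qed.

Lemma C_props : forall n (v : V), (nsub v <= n)%N ->
  [/\ good (Cpoly v), size (Cpoly v) = (nsub v).+1, 0 < lead_coef (Cpoly v)
    & (Cpoly v)`_0 = (ith_prime (label v))%:Z].
Proof.
elim=> [|n IH] v hv.
  by have := nsub_gt0 v; rewrite ltnNge hv.
set p := ith_prime (label v); have pp : prime p := nthp_prime _.
rewrite C_rec /pv -/p; case: ifP => hc.
  have hn : nsub v = 1%N by apply/eqP; rewrite -leaf_nsub hc.
  have c0 : ('X + (p%:Z)%:P)`_0 = p%:Z by rewrite coefD coefX coefC /= add0r.
  rewrite size_XaddC lead_coefXaddC hn c0; split => //; exists p; split => //.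
    by rewrite lead_coefXaddC p_not_dvd1.
  by rewrite size_XaddC => i; case: i => // _; rewrite c0 dvdzz.
have IHc : forall u, u \in children v -> [/\ good (Cpoly u), size (Cpoly u) = (nsub u).+1,
    0 < lead_coef (Cpoly u) & (Cpoly u)`_0 = (ith_prime (label u))%:Z].
  move=> u uc; apply: IH; have := nsub_ch uc; move: hv; clear.
  by set a := nsub u; set b := nsub v; lia.
set Pi := \prod_(u in children v) Cpoly u.
set m := nsub v.
have hm : (2 <= m)%N.
  have := nsub_gt0 v; move: hc; rewrite leaf_nsub -/m; clear; case: m => [|[|]] //.
have m0 : (m == 0%N) = false by apply/negbTE; rewrite -lt0n ltnW.
have sPi : size Pi = m.
  rewrite /Pi size_prod; last by move=> u uc; case: (IHc u uc) => g _ _ _; exact: good_neq0.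
  rewrite (eq_bigr (fun u => (nsub u + 1)%N)); last first.
    by move=> u uc; case: (IHc u uc) => _ -> _ _; rewrite addn1.
  rewrite big_split /= sum1_card /m nsub_rec.
  by clear; set a := (\sum_(_ in _) _)%N; set b := #|_|; lia.
have lPi : 0 < lead_coef Pi.
  by rewrite /Pi lead_coef_prod; apply: prodr_gt0 => u uc; case: (IHc u uc).
set P := 'X^m + _ + _.
have coefP : forall i, P`_i = (i == m)%:R + p%:Z * (if i == 0%N then 0 else Pi`_i.-1)
    + (if i == 0%N then p%:Z else 0).
  by move=> i; rewrite /P !coefD coefXn -mulrA coefCM coefXM coefC.
have Pm : P`_m = 1 + p%:Z * lead_coef Pi.
  by rewrite coefP eqxx /lead_coef sPi m0 addr0.
have lP : 0 < 1 + p%:Z * lead_coef Pi.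
  by move: lPi; clear; set L := lead_coef Pi; move=> *; lia.
have sP : size P = m.+1.
  apply/eqP; rewrite eqn_leq; apply/andP; split.
    apply/leq_sizeP => j hj; rewrite coefP.
    have j0 : (0 < j)%N by apply: leq_ltn_trans hj.
    rewrite (gtn_eqF hj) (gtn_eqF j0).
    rewrite nth_default; first by rewrite mulr0 !addr0.
    by rewrite sPi -ltnS prednK.
  rewrite ltnNge; apply/negP => h; move: (nth_default 0 h); rewrite -/(P`_m) Pm => e.
  by move: lP; rewrite e ltxx.
have lcP : lead_coef P = 1 + p%:Z * lead_coef Pi by rewrite /lead_coef sP /= -Pm.
have c0 : P`_0 = p%:Z.
  by rewrite coefP /= eq_sym m0 add0r mulr0 add0r.
rewrite sP lcP c0; split => //; exists p; split => //.
  by rewrite lcP rpredDr ?p_not_dvd1 // dvdz_mulr.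
rewrite sP /= => i hi; rewrite coefP.
rewrite (ltn_eqF hi).
rewrite add0r; apply: rpredD; first by apply: dvdz_mulr.
by case: (i == 0%N); [apply: dvdzz | apply: dvdz0].
Qed.

Lemma C_good (v : V) : good (Cpoly v).
Proof. by case: (@C_props _ v (leqnn _)). Qed.
Lemma C_size (v : V) : size (Cpoly v) = (nsub v).+1.
Proof. by case: (@C_props _ v (leqnn _)). Qed.
Lemma C_coef0 (v : V) : (Cpoly v)`_0 = (ith_prime (label v))%:Z.
Proof. by case: (@C_props _ v (leqnn _)). Qed.

End Cpart2.

Lemma C_decode (T T' : rltree) (v : vtx T) (w : vtx T') : Cpoly v = Cpoly w ->
  [/\ nsub v = nsub w, label v = label w, (children v == set0) = (children w == set0)
   & children v != set0 -> (\prod_(u in children v) Cpoly u = \prod_(u in children w) Cpoly u)%R].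
Proof.
move=> e.
have hn : nsub v = nsub w by have := C_size v; rewrite e C_size => -[].
have hl : label v = label w.
  apply: ith_prime_inj; try apply: label_pos.
  by have := C_coef0 v; rewrite e C_coef0 => -[].
have hc : (children v == set0) = (children w == set0) by rewrite !leaf_nsub hn.
split => // cv.
move: e; rewrite !C_rec (negPf cv) -hc (negPf cv) /pv hn hl => /addIr /addrI.
apply: mulfI; rewrite mulf_neq0 ?polyX_eq0 // polyC_eq0.
by apply/eqP => -[] h; have := nthp_prime (label w).-1; rewrite /ith_prime in h; rewrite h.
Qed.

Lemma decode (T T' : rltree) : forall n (v : vtx T) (w : vtx T'),
  nsub v <= n -> Cpoly v = Cpoly w ->
  exists g : vtx T -> vtx T', [/\ g v = w,
    {in subtree v, forall x, label (g x) = label x},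
    {in subtree v, forall x, x != v -> parent (g x) = g (parent x)},
    {in subtree v, forall x, g x \in subtree w} &
    {in subtree v &, injective g}].
Proof.
elim=> [|n IH] v w hv hC.
  by have := nsub_gt0 v; rewrite ltnNge hv.
have [hn hl hleaf hprod] := C_decode hC.
case: (boolP (children v == set0)) => cv.
  have sv := leaf_sub (eqP cv).
  exists (fun _ => w); rewrite sv; split => //.
  - by move=> x; rewrite inE => /eqP ->.
  - by move=> x; rewrite inE => /eqP ->; rewrite eqxx.
  - by move=> x _; exact: st_refl.
  - by move=> x y; rewrite !inE => /eqP -> /eqP ->.
have hP := hprod cv.
have [s [s1 s2 s3]] := matching w (F := @Cpoly T) (G := @Cpoly T') (n := #|children v|)
   erefl (fun u _ => C_good u) (fun u _ => C_good u) hP.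
pose Q (u : vtx T) (g : vtx T -> vtx T') := u \in children v -> [/\ g u = s u,
    {in subtree u, forall x, label (g x) = label x},
    {in subtree u, forall x, x != u -> parent (g x) = g (parent x)},
    {in subtree u, forall x, g x \in subtree (s u)} &
    {in subtree u &, injective g}].
have hex : forall u, exists g, Q u g.
  move=> u; case: (boolP (u \in children v)) => uc.
    have [|g hg] := IH u (s u) _ (esym (s2 u uc)).
      by have := nsub_ch uc; move: hv; clear; set a := nsub u; set b := nsub v; lia.
    by exists g.
  by exists (fun _ => w) => h; rewrite h in uc.
have [gs hgs] := functional_choice _ hex.
pose G x := if x == v then w else
  if [pick u in children v | x \in subtree u] is Some u then gs u x else w.
have HG : forall x, x \in subtree v -> x != v ->
    exists2 u, u \in children v & x \in subtree u /\ G x = gs u x.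
  move=> x xs xv; rewrite /G (negPf xv); case: pickP => [u /andP [uc xu] | none].
    by exists u.
  by case: (sub_ch xs xv) => u uc xu; have := none u; rewrite uc xu.
have Gv : G v = w by rewrite /G eqxx.
exists G; split => //.
- move=> x xs; case: (eqVneq x v) => [->|xv]; first by rewrite Gv hl.
  case: (HG x xs xv) => u uc [xu ->]; have [_ h2 _ _ _] := hgs u uc.
  exact: h2.
- move=> x xs xv; case: (HG x xs xv) => u uc [xu ->].
  have [h1 _ h3 _ _] := hgs u uc.
  case: (eqVneq x u) => [exu|xnu].
    subst x; rewrite h1; have := s1 u uc; rewrite chP => /andP [_ /eqP ->].
    by move: uc; rewrite chP => /andP [_ /eqP ->].
  rewrite h3 //.
  have pxu := par_sub xu xnu.
  have pxv : parent x != v.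
    by apply: contraNneq (ch_notsub uc) => <-.
  case: (HG (parent x) (ch_sub_sub uc pxu) pxv) => u' u'c [pxu' ->].
  by rewrite (ch_uniq uc u'c pxu pxu').
- move=> x xs; case: (eqVneq x v) => [->|xv]; first by rewrite Gv st_refl.
  case: (HG x xs xv) => u uc [xu ->]; have [_ _ _ h4 _] := hgs u uc.
  exact: ch_sub_sub (s1 u uc) (h4 x xu).
- have Gsub : forall x, x \in subtree v -> x != v -> exists2 u, u \in children v &
      [/\ x \in subtree u, G x = gs u x & G x \in subtree (s u)].
    move=> x xs xv; case: (HG x xs xv) => u uc [xu e]; exists u => //; split => //.
    by have [_ _ _ h4 _] := hgs u uc; rewrite e h4.
  move=> x y xs ys.
  case: (eqVneq x v) => [->|xv]; case: (eqVneq y v) => [->|yv] //.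
  + case: (Gsub y ys yv) => u uc [_ _ h]; rewrite Gv => e.
    by have := ch_notsub (s1 u uc); rewrite e h.
  + case: (Gsub x xs xv) => u uc [_ _ h]; rewrite Gv => e.
    by have := ch_notsub (s1 u uc); rewrite -e h.
  + case: (Gsub x xs xv) => u1 u1c [xu1 e1 h1].
    case: (Gsub y ys yv) => u2 u2c [yu2 e2 h2] e.
    rewrite e in h1.
    have su := ch_uniq (s1 u1 u1c) (s1 u2 u2c) h1 h2.
    have uu := s3 u1 u2 u1c u2c su; subst u2.
    have [_ _ _ _ h5] := hgs u1 u1c.
    by apply: h5 => //; rewrite -e1 -e2.
Qed.

Section Back.
Variables (T T' : rltree) (f : vtx T -> vtx T').
Hypothesis fiso : rl_iso f.

Let finj : injective f.
Proof. by case: fiso => /bij_inj. Qed.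
Let fr : f (troot T) = troot T'.
Proof. by case: fiso. Qed.

Lemma par_neq (v : vtx T) : v != troot T -> v != parent v.
Proof.
move=> vr; apply: contra vr => /eqP e.
by rewrite -(depthP v) iter_fix // -e.
Qed.

Lemma par_comm_n : forall n (v : vtx T), depth v <= n -> parent (f v) = f (parent v).
Proof.
have fa : forall u v, adj (f u) (f v) = adj u v by case: fiso.
elim=> [|n IH] v hv; case: (eqVneq v (troot T)) => [->|vr];
  try by rewrite fr !parent_root fr.
  by move: hv; rewrite leqn0 => /eqP /depth0 e; rewrite e eqxx in vr.
have hadj : adj v (parent v) by rewrite /adj par_neq // eqxx.
move: hadj; rewrite -fa /adj => /andP [_ /orP [/eqP -> // | /eqP h]].
exfalso; case: (eqVneq (parent v) (troot T)) => [pr|pr].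
  by rewrite pr fr parent_root in h; move: h; rewrite -fr => /finj e; rewrite e eqxx in vr.
rewrite IH in h; last first.
  by rewrite depth_par //; move: hv; clear; set a := depth v; lia.
move/finj: h => h.
have := depth_iter v 2; rewrite /= h.
have := depth_gt0 vr; clear; set a := depth v; lia.
Qed.

Lemma par_comm (v : vtx T) : parent (f v) = f (parent v).
Proof. exact: (@par_comm_n (depth v)). Qed.

Lemma iter_comm k (x : vtx T) : iter k (@parent T') (f x) = f (iter k (@parent T) x).
Proof. by elim: k => //= k ->; rewrite par_comm. Qed.

Lemma sub_img (x v : vtx T) : (f x \in subtree (f v)) = (x \in subtree v).
Proof.
rewrite /subtree !inE; apply/idP/idP => h.
  have := iter_findex h; rewrite iter_comm => /finj <-; exact: fconnect_iter.
have := iter_findex h => <-; rewrite -iter_comm; exact: fconnect_iter.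
Qed.

Let fsurj : forall y : vtx T', exists x, y = f x.
Proof. by case: fiso => [[g _ gK]] _ _ _ => y; exists (g y); rewrite gK. Qed.

Lemma subtree_img (v : vtx T) : subtree (f v) = f @: subtree v.
Proof.
apply/setP => y; case: (fsurj y) => x ->; by rewrite mem_imset // sub_img.
Qed.

Lemma children_img (v : vtx T) : children (f v) = f @: children v.
Proof.
apply/setP => y; case: (fsurj y) => x ->; rewrite mem_imset // !chP par_comm.
by rewrite (inj_eq finj) -fr (inj_eq finj).
Qed.

Lemma nsub_img (v : vtx T) : nsub (f v) = nsub v.
Proof. by rewrite /nsub subtree_img card_imset. Qed.

Lemma C_img : forall n (v : vtx T), nsub v <= n -> Cpoly (f v) = Cpoly v.
Proof.
have fl : forall v, label (f v) = label v by case: fiso.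
elim=> [|n IH] v hv.
  by have := nsub_gt0 v; rewrite ltnNge hv.
rewrite !C_rec children_img imset_eq0 /pv fl nsub_img.
case: ifP => // _; rewrite big_imset /=; last by move=> x y _ _; apply: finj.
congr (_ + _ * _ + _)%R; apply: eq_bigr => u uc; apply: IH.
by have := nsub_ch uc; move: hv; clear; set a := nsub u; set b := nsub v; lia.
Qed.

End Back.

Theorem mainTheorem5 (T T' : rltree) :
  Cpoly (troot T) = Cpoly (troot T') <-> exists f : vtx T -> vtx T', rl_iso f.
Proof.
split=> [hC|[f fiso]]; last first.
  have fr : f (troot T) = troot T' by case: fiso.
  by rewrite -fr (C_img fiso (leqnn _)).
have [g [g1 g2 g3 g4 g5]] := decode (leqnn _) hC.
have ginj : injective g by move=> x y; apply: g5; apply: sub_rt.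
have [hn _ _ _] := C_decode hC.
have card_all : forall R : rltree, nsub (troot R) = #|vtx R|.
  move=> R; rewrite /nsub; apply/eq_card => x; rewrite sub_rt; by [].
have hpar : forall x, parent (g x) = g (parent x).
  move=> x; case: (eqVneq x (troot T)) => [->|xr]; first by rewrite g1 !parent_root g1.
  by apply: g3 => //; apply: sub_rt.
exists g; split => //.
- apply: inj_card_bij => //; by rewrite -!card_all hn.
- by move=> v; apply: g2; apply: sub_rt.
- by move=> u v; rewrite /adj !hpar !(inj_eq ginj).
Qed.
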